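(* Let $0<q<1/2$, $p=1-q$, $z\ge 1$ an integer and $\kappa>0$. Define $$P(z,\kappa)=1-\sum_{k=0}^{z-1}\left(1-\left(\frac qp\right)^{z-k}\right)\frac{\mu^k}{k!}e^{-\mu},\qquad \mu=\kappa z\frac qp.$$ Then $$P(z,\kappa)=1-Q\!\left(z,\kappa z\frac qp\right)+\left(\frac qp\right)^z e^{\kappa z\frac{p-q}{p}}\,Q(z,\kappa z),$$ where $Q(a,x)=\Gamma(a,x)/\Gamma(a)$, with $\Gamma(a,x)=\int_x^{+\infty}t^{a-1}e^{-t}\,dt$, is the regularized upper incomplete gamma function.
   Context: $P(z,\kappa)$ is the probability of success of a double-spend attack (attackers with relative hash power $q$, honest miners with $p$) conditional on the honest miners having mined $z$ blocks in time $\tau_1=\kappa z t_0$, where $t_0$ is the mean honest block time; during this time the number of attacker blocks is Poisson with mean $\mu=\kappa zq/p$, and attackers lagging $m$ blocks behind catch up with probability $(q/p)^m$. *)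

(* Defs.v *)
From Stdlib Require Import Reals.
From Coquelicot Require Import Coquelicot.
Open Scope R_scope.

Definition Gamma_up (a : nat) (x : R) : R :=
  RInt_gen (fun t => t ^ (a - 1) * exp (- t)) (at_point x) (Rbar_locally p_infty).

Definition Gamma_fun (a : nat) : R := Gamma_up a 0.

Definition Q_reg (a : nat) (x : R) : R := Gamma_up a x / Gamma_fun a.

(* P(z,kappa) = 1 - sum_{k=0}^{z-1} (1 - (q/p)^(z-k)) mu^k/k! e^(-mu),
   mu = kappa z q/p, p = 1 - q.  (sum_f_R0 f n sums k = 0..n.) *)
Definition P_ds (q kappa : R) (z : nat) : R :=
  let p := 1 - q in
  let mu := kappa * INR z * (q / p) in
  1 - sum_f_R0 (fun k => (1 - (q / p) ^ (z - k)) * (mu ^ k / INR (Factorial.fact k)) * exp (- mu))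
        (z - 1).

(* Main.v *)
Require Import Defs.
From Stdlib Require Import Reals Lra Lia.
From Coquelicot Require Import Coquelicot.
From Stdlib Require Import Factorial.
Open Scope R_scope.

Definition Sn (n : nat) (t : R) : R :=
  sum_f_R0 (fun k => t ^ k / INR (fact k)) n.

Lemma pow_exp_bound (k : nat) (t : R) : 0 < t ->
  t ^ k * exp (- t) <= INR (fact (S k)) / t.
Proof.
  intros Ht.
  pose proof (exp_ge_taylor t (S k) (Rlt_le _ _ Ht)) as H.
  rewrite tech5 in H.
  assert (H0 : 0 <= sum_f_R0 (fun k0 : nat => t ^ k0 / INR (fact k0)) k).
  { apply cond_pos_sum. intros j. apply Rdiv_le_0_compat.
    apply pow_le; lra. apply lt_0_INR, lt_O_fact. }
  pose proof (lt_0_INR _ (lt_O_fact (S k))) as Hf.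
  pose proof (exp_pos t) as He.
  assert (Hm : t ^ S k / INR (fact (S k)) <= exp t) by lra.
  rewrite exp_Ropp.
  apply (Rmult_le_reg_r (t * exp t)). nra.
  replace (t ^ k * / exp t * (t * exp t)) with (t ^ S k) by (simpl; field; lra).
  replace (INR (fact (S k)) / t * (t * exp t)) with (INR (fact (S k)) * exp t) by (field; lra).
  apply (Rmult_le_reg_r (/ INR (fact (S k)))). apply Rinv_0_lt_compat; lra.
  replace (INR (fact (S k)) * exp t * / INR (fact (S k))) with (exp t) by (field; lra).
  exact Hm.
Qed.

Lemma lim_pow_exp (k : nat) : is_lim (fun t => t ^ k * exp (- t)) p_infty 0.
Proof.
  apply (is_lim_le_le_loc (fun _ => 0) (fun t => INR (fact (S k)) * / t)).
  - exists 0. intros t Ht. split.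
    + apply Rmult_le_pos. apply pow_le; lra. apply Rlt_le, exp_pos.
    + apply pow_exp_bound; lra.
  - apply is_lim_const.
  - replace (Finite 0) with (Rbar_mult (INR (fact (S k))) 0) by (simpl; f_equal; ring).
    apply is_lim_scal_l. apply (is_lim_inv (fun t => t) p_infty p_infty).
    apply is_lim_id. discriminate.
Qed.

Lemma lim_S (n : nat) : is_lim (fun t => exp (- t) * Sn n t) p_infty 0.
Proof.
  induction n as [|n IH].
  - unfold Sn; simpl.
    eapply is_lim_ext. 2: apply (lim_pow_exp 0).
    intros t; simpl. field.
  - apply (is_lim_ext (fun t => exp (- t) * Sn n t + t ^ S n * exp (- t) * / INR (fact (S n)))).
    + intros t. unfold Sn. rewrite tech5. unfold Rdiv. ring.
    + replace (Finite 0) with (Finite (0 + 0 * / INR (fact (S n)))) by (f_equal; ring).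
      apply is_lim_plus'. exact IH.
      apply (is_lim_scal_r (fun t => t ^ S n * exp (- t)) _ p_infty 0).
      apply lim_pow_exp.
Qed.

Definition Dn (n : nat) (t : R) : R := match n with 0%nat => 0 | S m => Sn m t end.

Lemma deriv_S (n : nat) (t : R) : is_derive (Sn n) t (Dn n t).
Proof.
  induction n as [|n IH].
  - unfold Sn; simpl. apply (is_derive_ext (fun _ => 1)).
    intros; simpl; field. auto_derive; [trivial | ring].
  - apply (is_derive_ext (fun t => Sn n t + t ^ S n / INR (fact (S n)))).
    intros u; unfold Sn; rewrite tech5; reflexivity.
    replace (Dn (S n) t) with (Dn n t + t ^ n / INR (fact n)).
    2: { destruct n as [|m]; simpl Dn; unfold Sn; [simpl; field | rewrite tech5; reflexivity]. }
    apply (is_derive_plus (Sn n) (fun t => t ^ S n / INR (fact (S n)))). exact IH.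
    auto_derive. trivial.
    change (match n with 0%nat => 1 | S _ => INR n + 1 end) with (INR (S n)).
    rewrite plus_INR, mult_INR, S_INR.
    pose proof (INR_fact_neq_0 n). pose proof (pos_INR n). pose proof (lt_0_INR _ (lt_O_fact n)). field. nra.

Qed.

Lemma S_minus_D (n : nat) (t : R) : Sn n t - Dn n t = t ^ n / INR (fact n).
Proof.
  destruct n as [|m]; simpl Dn; unfold Sn.
  - simpl. ring.
  - rewrite tech5. ring.
Qed.

Definition G (n : nat) (t : R) : R := - INR (fact n) * (exp (- t) * Sn n t).

Lemma deriv_G (n : nat) (t : R) : is_derive (G n) t (t ^ n * exp (- t)).
Proof.
  assert (H : is_derive (fun t => exp (- t) * Sn n t) t (- exp (- t) * Sn n t + exp (- t) * Dn n t)).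
  { pose proof (is_derive_mult (K := R_AbsRing) (fun t => exp (- t)) (Sn n) t (- exp (- t)) (Dn n t)) as Hm.
    apply Hm. auto_derive; [trivial | ring]. apply deriv_S.
    intros; apply Rmult_comm. }
  pose proof (is_derive_scal _ _ (- INR (fact n)) _ H) as H2.
  unfold G.
  replace (t ^ n * exp (- t)) with (- INR (fact n) * (- exp (- t) * Sn n t + exp (- t) * Dn n t)).
  exact H2.
  pose proof (S_minus_D n t) as E. pose proof (INR_fact_neq_0 n).
  replace (Dn n t) with (Sn n t - t ^ n / INR (fact n)) by lra.
  field. auto.
Qed.

Lemma Gamma_up_S (n : nat) (x : R) : Gamma_up (S n) x = INR (fact n) * exp (- x) * Sn n x.
Proof.
  unfold Gamma_up. replace (S n - 1)%nat with n by lia.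
  apply is_RInt_gen_unique.
  replace (INR (fact n) * exp (- x) * Sn n x) with (0 - G n x) by (unfold G; ring).
  apply (is_RInt_gen_ext (Derive (G n))).
  - apply filter_forall. intros ab u _. apply is_derive_unique, deriv_G.
  - apply is_RInt_gen_Derive.
    + apply filter_forall. intros ab u _. eexists. apply deriv_G.
    + apply filter_forall. intros ab u _.
      apply (continuous_ext (fun t => t ^ n * exp (- t))).
      intros; symmetry; apply is_derive_unique, deriv_G.
      apply (ex_derive_continuous (K := R_AbsRing) (V := R_NormedModule)). auto_derive. trivial.
    + intros P HP. unfold filtermap, at_point. apply locally_singleton. exact HP.
    + pose proof (is_lim_scal_l _ (- INR (fact n)) _ _ (lim_S n)) as H.
      replace (Rbar_mult (- INR (fact n)) 0) with (Finite 0) in H by (simpl; f_equal; ring).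
      exact H.
Qed.

Lemma Sn_0 (n : nat) : Sn n 0 = 1.
Proof.
  induction n as [|n IH]; unfold Sn in *; [simpl; field|].
  rewrite tech5, IH, pow_i by lia. unfold Rdiv. ring.
Qed.

Lemma Q_reg_S (n : nat) (x : R) : Q_reg (S n) x = exp (- x) * Sn n x.
Proof.
  unfold Q_reg, Gamma_fun. rewrite !Gamma_up_S, Sn_0, Ropp_0, exp_0.
  pose proof (INR_fact_neq_0 n). field. auto.
Qed.

Theorem mainTheorem5 (q kappa : R) (z : nat) :
  0 < q < 1 / 2 -> (1 <= z)%nat -> 0 < kappa ->
  let p := 1 - q in
  P_ds q kappa z =
    1 - Q_reg z (kappa * INR z * (q / p))
      + (q / p) ^ z * exp (kappa * INR z * ((p - q) / p)) * Q_reg z (kappa * INR z).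
Proof.
  intros Hq Hz Hk p.
  destruct z as [|n]; [lia|].
  rewrite !Q_reg_S. unfold P_ds. fold p.
  replace (S n - 1)%nat with n by lia.
  set (r := q / p). set (K := kappa * INR (S n)).
  assert (Hp : p <> 0) by (unfold p; lra).
  assert (E : exp (K * ((p - q) / p)) * exp (- K) = exp (- (K * r))).
  { rewrite <- exp_plus. f_equal. unfold r, p. field. lra. }
  rewrite sum_eq with (Bn := fun k => (K * r) ^ k / INR (fact k) * exp (- (K * r))
                         - (K ^ k / INR (fact k)) * (r ^ S n * exp (- (K * r)))).
  2: { intros i Hi. rewrite Rpow_mult_distr.
       replace (r ^ S n) with (r ^ (S n - i) * r ^ i).
       2: { rewrite <- pow_add. f_equal. lia. }
       set (a := r ^ (S n - i)). set (b := r ^ i). set (c := K ^ i). unfold Rdiv. ring. }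
  rewrite minus_sum. unfold Sn.
  rewrite (scal_sum (fun k => (K * r) ^ k / INR (fact k)) n (exp (- (K * r)))).
  rewrite <- (scal_sum (fun k => K ^ k / INR (fact k)) n (r ^ S n * exp (- (K * r)))).
  rewrite <- E. ring.
Qed.
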